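(* If $y^{(i_1)}$ and $y^{(i_2)}$ are two points lying in the same lap $I_j$, $1\le j\le n$, then $U\,V_\beta\,e_{i_1}=U\,V_\beta\,e_{i_2}$, where $e_i$ denotes the $i$-th standard basis vector of $\mathbb{R}^q$ (the vector representing $y^{(i)}$).
   Context: Setting. $I\subset\mathbb{R}$ compact interval; $f_i(x)=\rho_ix+\varrho_i$ ($i=1,\dots,n$), $0<|\rho_i|<1$, IFS with open set condition; $I$ is the union of a nonempty open interval $I_h$ (hole) and $f_1(I),\dots,f_n(I)$, with pairwise disjoint interiors and $I_h$ disjoint from the $f_i(I)$; $F(x)=f_i^{-1}(x)$ on $f_i(I)$. The laps $I_1,\dots,I_n$ (left to right) and the hole have endpoints $a_1<\dots<a_{n+2}$, hole $(a_h,a_{h+1})$; interior endpoints are turning/discontinuity points. Assume the forward orbit of every one-sided endpoint $a_i^\pm$ is finite. Points $y^{(1)},\dots,y^{(q)}$: the one-sided endpoints $a_1^+,a_2^-,a_2^+,\dots,a_{n+2}^-$ (with $a_i^-,a_i^+$ consecutive) together with all other points of their forward orbits, ordered along $I$. $V_\beta=[v_{ij}]$ ($q\times q$, $\beta\in\mathbb{R}$): if $F(y^{(j)})=y^{(i)}$, $v_{ij}=\varepsilon(y^{(j)})|F'(y^{(j)})|^{-\beta}$ with $\varepsilon$ the sign of $F'$ at $y^{(j)}$ (column zero for limits from inside the hole); for every pair of consecutive entries that are the two one-sided versions of a turning/discontinuity point between $y^{(j)}$ and $y^{(i)}$: if $y^{(i)}>y^{(j)}$, pair $y^{(k)},y^{(k+1)}$,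 $j\le k<i$, set $v_{kj}=v_{ij}$, $v_{k+1,j}=-v_{ij}$; if $y^{(i)}<y^{(j)}$, pair $y^{(k-1)},y^{(k)}$, $i<k\le j$, set $v_{k-1,j}=-v_{ij}$, $v_{kj}=v_{ij}$; all other entries $0$. $U$ is the $n\times q$ matrix with entry $(j,i)$ equal to $1$ if $y^{(i)}$ lies in lap $I_j$ and $0$ otherwise. *)

(* Defs.v *)
From HB Require Import structures.
From mathcomp Require Import all_boot all_order all_algebra.
From mathcomp Require Import all_classical all_reals exp.
Set Implicit Arguments.
Unset Strict Implicit.
Unset Printing Implicit Defensive.
Import Order.TTheory GRing.Theory Num.Theory.
Local Open Scope ring_scope.

(* Conventions (0-indexed):
   - endpoints a : 'I_(n+2) -> R, a 0 < a 1 < ... < a (n+1)  (paper: a_1<...<a_{n+2});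
     I = [a 0, a (n+1)].
   - the n+1 pieces between consecutive endpoints are indexed by k : 'I_(n+1);
     piece k is [a k, a (k+1)].  The hole is the open piece h : 'I_(n+1).
   - lap l : 'I_n (laps numbered left to right) is the piece  lift h l
     (= l if l < h, l+1 otherwise).
   - sigma l is the index of the IFS map with f_(sigma l)(I) = lap l, so that
     F = f_(sigma l)^{-1} on lap l.
   - a one-sided point is a pair (x, s) : R * bool; s = true means x^+ (limit
     from the right), s = false means x^- (limit from the left). *)

Section Setting.
Variable R : realType.
Variable n : nat.
Variable a : 'I_n.+2 -> R.
Variable h : 'I_n.+1.
Variables (rho varrho : 'I_n -> R).
Variable sigma : 'I_n -> 'I_n.

Definition pleft (k : 'I_n.+1) : 'I_n.+2 := widen_ord (leqnSn _) k.
Definition pright (k : 'I_n.+1) : 'I_n.+2 := lift ord0 k.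

Definition ifs (i : 'I_n) (x : R) : R := rho i * x + varrho i.

Definition Iset : set R := `[a ord0, a ord_max]%classic.
Definition hole : set R := `]a (pleft h), a (pright h)[%classic.
Definition lap_piece (l : 'I_n) : 'I_n.+1 := lift h l.
Definition lap_set (l : 'I_n) : set R :=
  `[a (pleft (lap_piece l)), a (pright (lap_piece l))]%classic.

(* order "along I" on one-sided points: x^- immediately precedes x^+ *)
Definition osle (p q : R * bool) : bool :=
  (p.1 < q.1) || ((p.1 == q.1) && (p.2 ==> q.2)).
Definition oslt (p q : R * bool) : bool :=
  (p.1 < q.1) || [&& p.1 == q.1, ~~ p.2 & q.2].

Definition piece_of (p : R * bool) : option 'I_n.+1 :=
  [pick k : 'I_n.+1 | if p.2 then (a (pleft k) <= p.1) && (p.1 < a (pright k))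
                      else (a (pleft k) < p.1) && (p.1 <= a (pright k))].

(* the lap containing a one-sided point (None if it lies in the hole) *)
Definition lap_of (p : R * bool) : option 'I_n := obind (unlift h) (piece_of p).

Definition Fos (p : R * bool) : option (R * bool) :=
  if lap_of p is Some l then
    Some ((p.1 - varrho (sigma l)) / rho (sigma l),
          if 0 < rho (sigma l) then p.2 else ~~ p.2)
  else None.

Definition Fder (p : R * bool) : R :=
  if lap_of p is Some l then (rho (sigma l))^-1 else 0.

Fixpoint iterF (k : nat) (p : R * bool) : option (R * bool) :=
  if k is k'.+1 then obind Fos (iterF k' p) else Some p.

Definition endpt (p : R * bool) : Prop :=
  exists m : 'I_n.+2,
    (p = (a m, true) /\ (m < n.+1)%N) \/ (p = (a m, false) /\ (0 < m)%N).

Definition inY (p : R * bool) : Prop :=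
  exists e k, endpt e /\ iterF k e = Some p.

Definition fwd_orbit (e : R * bool) : set (R * bool) :=
  [set p | exists k, iterF k e = Some p].

Variable beta : R.
Variable q : nat.
Variable y : 'I_q -> R * bool.

Definition vcoef (j : 'I_q) : R :=
  Num.sg (Fder (y j)) * powR `|Fder (y j)| (- beta).

(* contribution of the turning/discontinuity point a_m (interior endpoint)
   to entry (r, j), when F(y_j) = p *)
Definition pair_contrib (r j : 'I_q) (p : R * bool) (m : 'I_n.+2) : R :=
  if osle (y j) (a m, false) && osle (a m, true) p then
    (* y^(i) > y^(j): v_{k j} = v_{i j}, v_{k+1, j} = - v_{i j} *)
    (y r == (a m, false))%:R - (y r == (a m, true))%:R
  else if osle p (a m, false) && osle (a m, true) (y j) then
    (* y^(i) < y^(j): v_{k-1, j} = - v_{i j}, v_{k j} = v_{i j} *)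
    (y r == (a m, true))%:R - (y r == (a m, false))%:R
  else 0.

Definition Vbeta : 'M[R]_q :=
  \matrix_(r, j)
    if Fos (y j) is Some p then
      vcoef j * ((y r == p)%:R +
                 \sum_(m : 'I_n.+2 | (0 < m < n.+1)%N) pair_contrib r j p m)
    else 0.

Definition Umx : 'M[R]_(n, q) := \matrix_(l, i) (lap_of (y i) == Some l)%:R.

End Setting.

(* Main.v *)
Require Import Defs.
From HB Require Import structures.
From mathcomp Require Import all_boot all_order all_algebra.
From mathcomp Require Import all_classical all_reals exp.
From mathcomp Require Import zify ring lra.
Import Order.TTheory GRing.Theory Num.Theory.
Local Open Scope ring_scope.

Lemma a_lt {R : realType} {n} {a : 'I_n.+2 -> R}
  (Ha : forall k1 k2 : 'I_n.+2, (k1 < k2)%N -> a k1 < a k2) i j :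
  (a i < a j) = (i < j)%N.
Proof.
case: (ltnP i j) => [/Ha //|hji].
apply/negbTE; rewrite -leNgt.
move: hji; rewrite leq_eqVlt => /orP[/eqP e|/Ha /ltW //].
by rewrite (_ : j = i) //; apply: val_inj.
Qed.

Lemma a_le {R : realType} {n} {a : 'I_n.+2 -> R}
  (Ha : forall k1 k2 : 'I_n.+2, (k1 < k2)%N -> a k1 < a k2) i j :
  (a i <= a j) = (i <= j)%N.
Proof. by rewrite leNgt (a_lt Ha) -leqNgt. Qed.

Definition pp {R : realType} {n} (a : 'I_n.+2 -> R) (k : 'I_n.+1) (p : R * bool) : bool :=
  if p.2 then (a (pleft k) <= p.1) && (p.1 < a (pright k))
  else (a (pleft k) < p.1) && (p.1 <= a (pright k)).

Lemma osleC {R : realType} (u : R * bool) x :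
  osle u (x, false) = ~~ osle (x, true) u.
Proof.
case: u => u1 u2; rewrite /osle /=.
by case: u2; case: ltgtP => //=; rewrite ?andbT ?andbF.
Qed.

Lemma pp_osle {R : realType} {n} {a : 'I_n.+2 -> R} k u :
  pp a k u = osle (a (pleft k), true) u && osle u (a (pright k), false).
Proof.
case: u => u1 u2; rewrite /pp /osle /=.
case: u2 => /=; rewrite ?andbT ?andbF ?orbF.
- by rewrite le_eqVlt orbC.
- by rewrite (le_eqVlt u1) orbC.
Qed.

Lemma G_pp {R : realType} {n} {a : 'I_n.+2 -> R}
  (Ha : forall k1 k2 : 'I_n.+2, (k1 < k2)%N -> a k1 < a k2) k u m :
  pp a k u -> osle (a m, true) u = (m <= k)%N.
Proof.
case: u => x s; rewrite /pp /osle /=.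
have Hl : a m <= a (pleft k) = (m <= k)%N by rewrite (a_le Ha).
have Hr : a (pright k) <= a m = (k < m)%N by rewrite (a_le Ha) /pright lift0.
case: (leqP m k) => hmk.
- have {}Hl : a m <= a (pleft k) by rewrite Hl.
  case: s => /andP[h1 h2].
  + have := le_trans Hl h1; rewrite le_eqVlt => /orP[->|->] //; by rewrite orbT.
  + by rewrite (le_lt_trans Hl h1).
- have {}Hr : a (pright k) <= a m by rewrite Hr.
  case: s => /andP[h1 h2].
  + rewrite andbT orbC -le_eqVlt; apply/negbTE; rewrite -ltNge.
    exact: (lt_le_trans h2 Hr).
  + rewrite andbF orbF; apply/negbTE; rewrite -leNgt.
    exact: (le_trans h2 Hr).
Qed.

Lemma pp_uniq {R : realType} {n} {a : 'I_n.+2 -> R}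
  (Ha : forall k1 k2 : 'I_n.+2, (k1 < k2)%N -> a k1 < a k2) k1 k2 u :
  pp a k1 u -> pp a k2 u -> k1 = k2.
Proof.
move=> H1 H2; apply: val_inj; apply/eqP; rewrite eqn_leq.
have e := @G_pp _ _ _ Ha _ _ (pleft k1) H2.
rewrite (@G_pp _ _ _ Ha _ _ (pleft k1) H1) /= leqnn in e.
have f := @G_pp _ _ _ Ha _ _ (pleft k2) H1.
rewrite (@G_pp _ _ _ Ha _ _ (pleft k2) H2) /= leqnn in f.
by rewrite -e -f.
Qed.

Lemma lapE {R : realType} {n} {a : 'I_n.+2 -> R}
  (Ha : forall k1 k2 : 'I_n.+2, (k1 < k2)%N -> a k1 < a k2) h u l :
  (lap_of a h u == Some l) = pp a (lift h l) u.
Proof.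
rewrite /lap_of /piece_of; case: pickP => [k' Hk' | H0] /=.
- case: unliftP Hk' => [j' -> | ->] Hk' /=.
  + apply/eqP/idP => [[<-] //|H]; congr Some; apply: (@lift_inj _ h).
    exact: (@pp_uniq _ _ _ Ha _ _ _ Hk' H).
  + symmetry; apply/negbTE/negP => H; have := @pp_uniq _ _ _ Ha _ _ _ Hk' H => /eqP.
    by rewrite (negbTE (neq_lift _ _)).
- by rewrite /pp H0.
Qed.

Lemma pp_aF {R : realType} {n} {a : 'I_n.+2 -> R}
  (Ha : forall k1 k2 : 'I_n.+2, (k1 < k2)%N -> a k1 < a k2) k m :
  pp a k (a m, false) = (m == pright k).
Proof.
rewrite /pp /= (a_lt Ha) (a_le Ha) -val_eqE /= /bump /= ?add1n.
apply/andP/eqP; lia.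
Qed.

Lemma pp_aT {R : realType} {n} {a : 'I_n.+2 -> R}
  (Ha : forall k1 k2 : 'I_n.+2, (k1 < k2)%N -> a k1 < a k2) k m :
  pp a k (a m, true) = (m == pleft k).
Proof.
rewrite /pp /= (a_lt Ha) (a_le Ha) -val_eqE /= /bump /= ?add1n.
apply/andP/eqP; lia.
Qed.

Lemma sum_pred1 {R : realType} {N} (P : pred 'I_N) (F : 'I_N -> R) x :
  \sum_(m | P m) F m * (m == x)%:R = (P x)%:R * F x.
Proof.
rewrite big_mkcond (bigD1 x) //= big1 => [|m /negbTE hm]; last by rewrite hm mulr0 if_same.
by case: (P x); rewrite ?eqxx ?mulr1 ?mul1r ?mul0r ?addr0.
Qed.
Lemma final_arith {R : realType} (n k kj : nat) (gk gk1 : bool) :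
 (k <= n)%N -> (kj <= n)%N -> (gk1 -> gk) -> (k = 0%N -> gk) -> (k = n -> ~~ gk1) ->
 (gk && ~~ gk1)%:R + (0 < k.+1 < n.+1)%N%:R *
   (if ~~ (k.+1 <= kj)%N && gk1 then 1 else if ~~ gk1 && (k.+1 <= kj)%N then -1 else 0)
 - (0 < k < n.+1)%N%:R *
   (if ~~ (k <= kj)%N && gk then 1 else if ~~ gk && (k <= kj)%N then -1 else 0)
 = (k == kj)%:R :> R.
Proof.
move=> hk hkj /implyP h1 h0 hn.
have e1 : (0 < k.+1 < n.+1)%N = (k < n)%N by lia.
have e2 : (0 < k < n.+1)%N = (0 < k)%N by lia.
rewrite e1 e2.
case: (ltngtP k kj) => c.
- have -> : (k < n)%N by lia.
  have e3 : (k.+1 <= kj)%N = true by lia.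
  have e4 : (k <= kj)%N = true by lia.
  have e5 : (k == kj) = false by lia.
  rewrite ?e3 ?e4 ?e5 /=.
  case: (posnP k) => [k0|kp]; first by move: (h0 k0) => ->; case: gk1 {h1 hn} => /=; lra.
  by case: gk gk1 h1 {h0 hn} => [] [] //= _; lra.
- have e3 : (k.+1 <= kj)%N = false by lia.
  have e4 : (k <= kj)%N = false by lia.
  have e5 : (k == kj) = false by lia.
  have -> : (0 < k)%N by lia.
  rewrite ?e3 ?e4 ?e5 /=.
  case: (ltngtP k n) => cn; try lia.
  + by case: gk gk1 h1 {h0 hn} => [] [] //= _; lra.
  + by move: (hn cn); case: gk gk1 h1 {h0 hn} => [] [] //= _; lra.
- subst kj; rewrite ?ltnn ?leqnn ?eqxx /=.
  case: (ltngtP k n) => cn; try lia.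
  + case: (posnP k) => [k0|kp].
    * by move: (h0 k0) => ->; case: gk1 {h1 hn} => /=; lra.
    * by case: gk gk1 h1 {h0 hn} => [] [] //= _; lra.
  + have := hn cn; case: (posnP k) => [k0|kp].
    * by move: (h0 k0) => ->; case: gk1 {h1 hn} => /=; lra.
    * by case: gk gk1 h1 {h0 hn} => [] [] //= _; lra.
Qed.

Lemma gmono {R : realType} {n} {a : 'I_n.+2 -> R}
  (Ha : forall k1 k2 : 'I_n.+2, (k1 < k2)%N -> a k1 < a k2) (u : R * bool) (m1 m2 : 'I_n.+2) :
  osle (a m2, true) u -> (m1 <= m2)%N -> osle (a m1, true) u.
Proof.
case: u => x s; rewrite /osle /= => H hle.
have : a m1 <= a m2 by rewrite (a_le Ha).
rewrite le_eqVlt => /orP[/eqP->//|lt].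
move: H => /orP[H|/andP[/eqP e hs]]; first by rewrite (lt_trans lt H).
by rewrite -e lt.
Qed.

Lemma sum_pick {R : realType} {q} (y : 'I_q -> R * bool) (Hinj : injective y)
  (L : 'I_q -> R) z r0 : y r0 = z -> \sum_r L r * (y r == z)%:R = L r0.
Proof.
move=> Hr0; rewrite (bigD1 r0) //= Hr0 eqxx mulr1 big1 ?addr0 // => r /negbTE hr.
by rewrite -Hr0 (inj_eq Hinj) hr mulr0.
Qed.

Lemma osle_TL {R : realType} (x z : R) s : x < z -> osle (x, true) (z, s).
Proof. by move=> h; rewrite /osle /= h. Qed.
Lemma osle_TR {R : realType} (x z : R) : x <= z -> osle (x, true) (z, true).
Proof. by rewrite /osle /= andbT orbC -le_eqVlt. Qed.
Lemma nosle_L {R : realType} (x z : R) s : z < x -> ~~ osle (x, true) (z, s).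
Proof.
move=> h; rewrite /osle /= negb_or (lt_gtF h) /=.
by rewrite (gt_eqF h).
Qed.
Lemma nosle_R {R : realType} (x z : R) : z <= x -> ~~ osle (x, true) (z, false).
Proof. by move=> h; rewrite /osle /= andbF orbF -leNgt. Qed.
Local Open Scope classical_set_scope.

Theorem lemma2 (R : realType) (n : nat) (a : 'I_n.+2 -> R) (h : 'I_n.+1)
    (rho varrho : 'I_n -> R) (sigma : 'I_n -> 'I_n)
    (beta : R) (q : nat) (y : 'I_q -> R * bool) :
  (* endpoints strictly increasing *)
  (forall k1 k2 : 'I_n.+2, (k1 < k2)%N -> a k1 < a k2) ->
  (* contraction ratios *)
  (forall i, 0 < `|rho i| < 1) ->
  (* the laps, left to right, are the images f_i(I) *)
  injective sigma ->
  (forall l, ifs rho varrho (sigma l) @` Iset a = lap_set a h l) ->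
  (* I is the union of the hole and the f_i(I) *)
  Iset a = hole a h `|` \bigcup_(i in setT) (ifs rho varrho i @` Iset a) ->
  (* forward orbits of one-sided endpoints are finite *)
  (forall e, endpt a e -> finite_set (fwd_orbit a h rho varrho sigma e)) ->
  (* y^(1), ..., y^(q): these points, listed in increasing order along I *)
  (forall i j : 'I_q, (i < j)%N -> oslt (y i) (y j)) ->
  (forall p, inY a h rho varrho sigma p <-> exists i, y i = p) ->
  forall (i1 i2 : 'I_q) (j : 'I_n),
    lap_of a h (y i1) = Some j -> lap_of a h (y i2) = Some j ->
    Umx a h y *m Vbeta a h rho varrho sigma beta y *m delta_mx i1 (ord0 : 'I_1)
    = Umx a h y *m Vbeta a h rho varrho sigma beta y *m delta_mx i2 (ord0 : 'I_1).
Proof.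
move=> Ha Hrho Hsig Himg HI Hfin Hord HY i1 i2 j Hi1 Hi2.
have Hinj : injective y.
  move=> r1 r2 e.
  have oslt_irr : forall u : R * bool, oslt u u = false.
    by move=> [u1 u2]; rewrite /oslt ltxx eqxx /=; case: u2.
  case: (ltngtP r1 r2) => c; last by apply: val_inj.
  + by have := Hord _ _ c; rewrite e oslt_irr.
  + by have := Hord _ _ c; rewrite e oslt_irr.
have Hend : forall m : 'I_n.+2, (0 < m < n.+1)%N -> forall b, exists r, y r = (a m, b).
  move=> m /andP[m0 mn] b; apply/HY; exists (a m, b), 0%N; split => //.
  by exists m; case: b; [left|right].
have Hcol : forall i, lap_of a h (y i) = Some j -> forall l (z : 'I_1),
    (Umx a h y *m Vbeta a h rho varrho sigma beta y *m delta_mx i (ord0 : 'I_1)) l z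
    = vcoef a h rho sigma beta y i * (l == j)%:R.
  move=> i Hi l z.
  rewrite mxE (bigD1 i) //= big1 => [|r /negbTE hr]; last by rewrite [X in _ * X]mxE hr mulr0.
  rewrite [X in _ * X]mxE eqxx (ord1 z) eqxx mulr1 addr0 mxE.
  have [p Hp] : exists p, Fos a h rho varrho sigma (y i) = Some p.
    by rewrite /Fos Hi; eexists.
  under eq_bigr => r _ do rewrite !mxE Hp.
  have [rp Hrp] : exists r, y r = p.
    apply/HY; have [e [k [He Hk]]] := proj2 (HY (y i)) (ex_intro _ i erefl).
    by exists e, k.+1; split => //=; rewrite Hk /= Hp.
  have Hpi : pp a (lift h j) (y i) by rewrite -(lapE Ha) Hi.
  under eq_bigr => r _ do rewrite mulrCA mulrDr big_distrr /=.
  rewrite -big_distrr /= big_split /= exchange_big /=; congr (_ * _).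
  rewrite (sum_pick y Hinj _ _ _ Hrp) (lapE Ha) Hrp.
  rewrite (eq_bigr (fun m : 'I_n.+2 => (if osle (y i) (a m, false) && osle (a m, true) p then 1
      else if osle p (a m, false) && osle (a m, true) (y i) then -1 else 0) *
      ((m == pright (lift h l))%:R - (m == pleft (lift h l))%:R))); last first.
    move=> m hm; have [rm Hrm] := Hend m hm false; have [rP HrP] := Hend m hm true.
    rewrite /pair_contrib; case: ifP => c1; [|case: ifP => c2].
    - under eq_bigr => r _ do rewrite mulrBr.
      by rewrite sumrB (sum_pick y Hinj _ _ _ Hrm) (sum_pick y Hinj _ _ _ HrP) !(lapE Ha) Hrm HrP (pp_aF Ha) (pp_aT Ha) mul1r.
    - under eq_bigr => r _ do rewrite mulrBr.
      by rewrite sumrB (sum_pick y Hinj _ _ _ Hrm) (sum_pick y Hinj _ _ _ HrP) !(lapE Ha) Hrm HrP (pp_aF Ha) (pp_aT Ha) mulN1r opprB.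
    - by rewrite mul0r big1 // => r _; rewrite mulr0.
  under eq_bigr => m _ do rewrite mulrBr.
  rewrite sumrB !sum_pred1 addrA.
  have [gp0 gpN] : (forall m : 'I_n.+2, nat_of_ord m = 0%N -> osle (a m, true) p) /\
      (forall m : 'I_n.+2, nat_of_ord m = n.+1 -> ~~ osle (a m, true) p).
    have Hc : lap_set a h j (a (pleft (lift h j))).
      rewrite /lap_set /= in_itv /= lexx (a_le Ha) /=.
      by rewrite [bump 0 _]/bump leq0n add1n leqnSn.
    have Hd : lap_set a h j (a (pright (lift h j))).
      rewrite /lap_set /= in_itv /= lexx andbT (a_le Ha) /=.
      by rewrite [bump 0 _]/bump leq0n add1n leqnSn.
    rewrite -Himg in Hc Hd.
    case: Hc => u Hu Hcu; case: Hd => w Hw Hdw.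
    move: Hu Hw; rewrite /Iset /= !in_itv /= => /andP[u0 u1] /andP[w0 w1].
    rewrite /ifs in Hcu Hdw.
    move: Hp; rewrite /Fos Hi => -[<-].
    move: Hpi; rewrite /pp; case: (y i) => x s /=.
    set rr := rho (sigma j) in Hcu Hdw *; set vv := varrho (sigma j) in Hcu Hdw *.
    have rr0 : rr != 0 by rewrite -normr_gt0; case/andP: (Hrho (sigma j)).
    set zz := (x - vv) / rr.
    have xz : x = rr * zz + vv by rewrite /zz; field.
    have Hm0 : forall m : 'I_n.+2, nat_of_ord m = 0%N -> a m = a ord0.
      by move=> m e; congr a; apply: val_inj.
    have HmN : forall m : 'I_n.+2, nat_of_ord m = n.+1 -> a m = a ord_max.
      by move=> m e; congr a; apply: val_inj.
    move: rr0; rewrite neq_lt => /orP[rneg|rpos].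
    - rewrite (lt_gtF rneg).
      case: s => /andP[hx1 hx2]; split=> m /=.
      + move/Hm0 ->; apply: osle_TL; nra.
      + move/HmN ->; apply: nosle_R; nra.
      + move/Hm0 ->; apply: osle_TR; nra.
      + move/HmN ->; apply: nosle_L; nra.
    - rewrite rpos.
      case: s => /andP[hx1 hx2]; split=> m /=.
      + move/Hm0 ->; apply: osle_TR; nra.
      + move/HmN ->; apply: nosle_L; nra.
      + move/Hm0 ->; apply: osle_TL; nra.
      + move/HmN ->; apply: nosle_R; nra.
  rewrite pp_osle !osleC !(@G_pp _ _ _ Ha _ _ _ Hpi).
  rewrite -(inj_eq (@lift_inj _ h)).
  set k := lift h l; set kj := lift h j.
  have ePr : nat_of_ord (pright k) = k.+1 by rewrite /pright lift0.
  have ePl : nat_of_ord (pleft k) = k by [].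
  rewrite ePr ePl.
  apply: final_arith.
  - by rewrite -ltnS.
  - by rewrite -ltnS.
  - by move=> H; apply: (gmono Ha _ _ _ H); rewrite ePl ePr.
  - by move=> k0; apply: gp0; rewrite ePl.
  - by move=> kn; apply: gpN; rewrite ePr kn.
have Hv : vcoef a h rho sigma beta y i1 = vcoef a h rho sigma beta y i2.
  by rewrite /vcoef /Fder Hi1 Hi2.
by apply/matrixP => l z; rewrite !Hcol // Hv.

Qed.
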